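(* Given $i \in [n-3]$, $j \in [n-2]$ and $k\in [n-1]$ such that $i\leq j\leq k$, we have $\langle i,j,k\rangle\in \mathcal{W}^{\Theta}$ if, and only if, one of the following happens: (1) $a_i,a_j,a_k \not\in\Theta$; (2) $j=i+1$, $a_i \in \Theta$ and $a_{i+1},a_k \not\in\Theta$; (3) $k=j+1$, $a_j \in \Theta$ and $a_i, a_{j+1} \not\in\Theta$; (4) $k-1=j=i+1$, $a_i,a_{i+1} \in \Theta$ and $a_{i+2} \not\in\Theta$.
   Context: Let $n\geq 2$ and $[m]=\{1,\dots,m\}$. Let $S_n$ be the symmetric group (Weyl group of type $A_{n-1}$), generated by the simple reflections $s_i=(i,i+1)$, $i\in[n-1]$, with simple roots $\Sigma=\{a_1,\dots,a_{n-1}\}$. For $\Theta\subset\Sigma$, let $\mathcal{W}^{\Theta}=\{w\in S_n : \ell(w)<\ell(ws_i) \text{ for all } a_i\in\Theta\}$ be the set of minimal length representatives of the cosets of the parabolic subgroup $\mathcal{W}_\Theta=\langle s_i : a_i\in\Theta\rangle$; equivalently, writing $\Sigma\setminus\Theta=\{a_{k_1},\dots,a_{k_r}\}$ with $k_1<\dots<k_r$, $\mathcal{W}^{\Theta}$ consists of the permutations $w$ (in one-line notation $w(1)\cdots w(n)$) whose descents can occur only at positions $k_1,\dots,k_r$. The code of $w\in S_n$ is $\alpha=(\alpha_1,\dots,\alpha_{n-1})$ with $\alpha_i=\#\{k>i : w(k)<w(i)\}$. The code spectrum of $w$ is the unique weakly increasing sequence $0<b_1\leq b_2\leq\cdots\leq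 b_l<n$ such that $\alpha_i=\#\{j : b_j=i\}$ for each $i$; the permutation with code spectrum $b_1,\dots,b_l$ is denoted $\langle b_1,\dots,b_l\rangle$. Thus $\langle i,j,k\rangle$ denotes the permutation of length $3$ whose code has one box in each of rows $i$, $j$, $k$ (counted with multiplicity). *)

(* Defs.v *)
From mathcomp Require Import all_boot all_fingroup.
Set Implicit Arguments. Unset Strict Implicit. Unset Printing Implicit Defensive.

(* Conventions: positions and values are 1-based, as in the paper.
   A permutation w : 'S_n acts on 'I_n = {0,..,n-1}; its one-line notation
   w(1) ... w(n) is obtained by shifting by one. *)

Definition oneline (n : nat) (w : 'S_n) : seq nat :=
  [seq (w x).+1 | x <- enum 'I_n].

Definition wl (n : nat) (w : 'S_n) (p : nat) : nat := nth 0 (oneline w) p.-1.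

Definition code (n : nat) (w : 'S_n) (i : nat) : nat :=
  count (fun k => wl w k < wl w i) (iota i.+1 (n - i)).

(* w has code spectrum b = b_1 <= ... <= b_l :  alpha_m = #{ j : b_j = m }
   for every m in [n-1]; so the permutation <b_1,...,b_l> is the (unique)
   w satisfying this. *)
Definition has_code_spectrum (n : nat) (w : 'S_n) (b : seq nat) : Prop :=
  forall m, 1 <= m <= n - 1 -> code w m = count_mem m b.

(* Theta is a subset of the simple roots {a_1,..,a_{n-1}}, encoded by the
   indices of its roots.  w \in W^Theta iff descents of w occur only at
   positions p with a_p \notin Theta, i.e. w(p) < w(p+1) for all a_p in Theta. *)
Definition in_W_Theta (n : nat) (Theta : pred nat) (w : 'S_n) : Prop :=
  forall p, 1 <= p <= n - 1 -> Theta p -> wl w p < wl w p.+1.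

(* Main.v *)
Require Import Defs.
From mathcomp Require Import all_boot all_fingroup.
From mathcomp Require Import zify.
Set Implicit Arguments. Unset Strict Implicit.

Lemma wlE n (w : 'S_n) p (hp : p < n) : wl w p.+1 = (w (Ordinal hp)).+1.
Proof.
rewrite /wl /oneline /=.
rewrite (nth_map (Ordinal hp)); last by rewrite size_enum_ord.
have -> : nth (Ordinal hp) (enum 'I_n) p = Ordinal hp.
  by apply: val_inj; rewrite /= nth_enum_ord.
by [].
Qed.

Lemma wl_inj n (w : 'S_n) p q : 1 <= p <= n -> 1 <= q <= n -> wl w p = wl w q -> p = q.
Proof.
case: p => // p; case: q => // q /andP[_ hp] /andP[_ hq].
rewrite (wlE w hp) (wlE w hq) => -[] H.
have := congr1 val (perm_inj (val_inj H)). by move=> /= ->.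
Qed.

Lemma codeS n (w : 'S_n) p : 1 <= p -> p < n ->
  code w p = (wl w p.+1 < wl w p) + count (fun k => wl w k < wl w p) (iota p.+2 (n - p.+1)).
Proof.
move=> h1 h2. rewrite /code.
have -> : n - p = (n - p.+1).+1 by lia.
by [].
Qed.

Lemma key n (w : 'S_n) p : 1 <= p -> p < n ->
  (wl w p < wl w p.+1) = (code w p <= code w p.+1).
Proof.
move=> h1 h2.
rewrite (codeS w h1 h2) /code.
set s := iota p.+2 (n - p.+1).
have ne : wl w p <> wl w p.+1.
  move=> /(wl_inj) H. have := H ltac:(lia) ltac:(lia). lia.
case: (ltngtP (wl w p) (wl w p.+1)) => H //.
- rewrite add0n. apply/esym; apply: sub_count => x /= h. exact: ltn_trans h H.
- apply/esym/negbTE; rewrite -ltnNge add1n ltnS.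
  apply: sub_count => x /= h. exact: ltn_trans h H.
Qed.

Lemma code_cm n (w : 'S_n) i j k : k <= n - 1 -> i <= j <= k ->
  has_code_spectrum w [:: i; j; k] ->
  forall p, 1 <= p <= n -> code w p = (i == p) + (j == p) + (k == p).
Proof.
move=> hk hijk H p /andP[h1 h2].
case: (ltnP p n) => hpn.
  rewrite H; last by lia.
  by rewrite /= addn0 !addnA.
have -> : p = n by lia.
rewrite /code subnn /=.
have -> : (i == n) = false by apply/eqP; lia.
have -> : (j == n) = false by apply/eqP; lia.
have -> : (k == n) = false by apply/eqP; lia.
by [].
Qed.

Theorem lemma5p2 (n : nat) (Theta : pred nat) (i j k : nat) (w : 'S_n) :
  2 <= n ->
  (forall m, Theta m -> 1 <= m <= n - 1) ->
  1 <= i <= n - 3 -> 1 <= j <= n - 2 -> 1 <= k <= n - 1 ->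
  i <= j <= k ->
  has_code_spectrum w [:: i; j; k] ->
  (in_W_Theta Theta w <->
   [\/ ~ Theta i /\ ~ Theta j /\ ~ Theta k,
       j = i.+1 /\ Theta i /\ ~ Theta i.+1 /\ ~ Theta k,
       k = j.+1 /\ Theta j /\ ~ Theta i /\ ~ Theta j.+1
     | k.-1 = j /\ j = i.+1 /\ Theta i /\ Theta i.+1 /\ ~ Theta i.+2]).
Proof.
move=> hn hT hi hj hk hijk hc.
have hk' : k <= n - 1 by lia.
pose cm p := ((i == p) + (j == p) + (k == p))%N.
have E : in_W_Theta Theta w <-> (forall p, Theta p -> cm p <= cm p.+1).
  split.
  - move=> H p tp. have hp := hT p tp.
    have := H p hp tp. rewrite key; [|lia|lia].
    rewrite (code_cm hk' hijk hc); [|lia]. rewrite (code_cm hk' hijk hc); [|lia].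
    by rewrite /cm.
  - move=> H p hp tp.
    rewrite key; try lia.
    rewrite (code_cm hk' hijk hc); [|lia]. rewrite (code_cm hk' hijk hc); [|lia].
    exact: H.
rewrite E; clear E; rewrite /cm.
split.
- move=> H.
  have nk : ~ Theta k.
    move=> t; have := H k t; have := hT k t; lia.
  have tj : Theta j -> k = j.+1 /\ i < j.
    move=> t; have := H j t; have := hT j t; lia.
  have ti : Theta i -> j = i.+1.
    move=> t; have := H i t; have := hT i t; lia.
  case: (boolP (Theta i)) => ti'; case: (boolP (Theta j)) => tj'.
  + have [e1 e2] := tj tj'. have e3 := ti ti'. apply: Or44.
    split; first lia. split; first lia. split => //. split; first by rewrite -e3.
    by have -> : i.+2 = k by lia.
  + have e3 := ti ti'. apply: Or42. rewrite -e3; split; [done|split; [done|split; [exact/negP|exact nk]]].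
  + have [e1 e2] := tj tj'. apply: Or43. rewrite -e1; split; [done|split; [done|split; [exact/negP|exact nk]]].
  + by apply: Or41; split; [apply/negP|split; [apply/negP|]].
- case=> [[a [b c]]|[e [a [b c]]]|[e [a [b c]]]|[e1 [e2 [a [b c]]]]] p tp; have := hT p tp.
  + have : p != i by apply/eqP => q; subst.
    have : p != j by apply/eqP => q; subst.
    have : p != k by apply/eqP => q; subst.
    lia.
  + have : p != j by apply/eqP => q; subst.
    have : p != k by apply/eqP => q; subst.
    lia.
  + have : p != i by apply/eqP => q; subst.
    have : p != k by apply/eqP => q; subst.
    have : i != j by apply/eqP => q; subst.
    lia.
  + have : p != k.
      by apply/eqP => q; apply: c; have -> : i.+2 = p by lia.
    lia.
Qed.
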